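(* In the fixing phase described in the context, the expected regret accumulated by the whole system during the fixing phase is upper bounded by $$K^2M\exp\left(\frac{K-1}{M-1}\right).$$
   Context: There are $K$ users and $M\ge2$ channels, slotted synchronized time, no communication. A user on channel $m$ together with $n-1$ other users gets a reward in $[0,1]$ with mean $\mu(m,n)$ (the same for all users), so the regret incurred by a user in one slot is at most $1$. $f^\ast=(f^\ast(1),\dots,f^\ast(M))$ is a maximizer of $\sum_{i}f(i)\mu(i,f(i))$ over nonnegative integer vectors with $\sum_i f(i)=K$ (the optimal number of users per channel). Fixing phase (procedure Alloc): in every slot, each user that is not yet fixed picks a channel uniformly at random among the $M$ channels; if the number of users on the chosen channel $a$ in that slot is such that $\mu(a,f(a))\ge\mu(a,f^\ast(a))$ (i.e. at most $f^\ast(a)$ users are on it), the user becomes fixed on $a$ and chooses $a$ in all later slots of the phase. The fixing phase lasts until all users are fixed; regret is incurred during it. *)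

(* Defs.v *)
From HB Require Import structures.
From mathcomp Require Import all_boot all_order all_algebra.
Set Implicit Arguments. Unset Strict Implicit. Unset Printing Implicit Defensive.
Import Order.TTheory GRing.Theory Num.Theory.
Local Open Scope ring_scope.

(* A state of the fixing phase: for each user, [Some a] if it is fixed on
   channel a, [None] if not yet fixed. *)
Definition state (K M : nat) := {ffun 'I_K -> option 'I_M}.

(* One slot of randomness: every user draws a channel uniformly at random;
   fixed users ignore their draw (equivalent in law to only unfixed users
   drawing). *)
Definition draw (K M : nat) := {ffun 'I_K -> 'I_M}.

Definition pos K M (s : state K M) (c : draw K M) (k : 'I_K) : 'I_M :=
  if s k is Some a then a else c k.

Definition load K M (s : state K M) (c : draw K M) (a : 'I_M) : nat :=
  #|[set k | pos s c k == a]|.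

Definition step K M (fstar : 'I_M -> nat) (s : state K M) (c : draw K M)
  : state K M :=
  [ffun k => if s k is Some a then Some a
             else if (load s c (c k) <= fstar (c k))%N then Some (c k) else None].

Definition all_fixed K M (s : state K M) : bool := [forall k, s k != None].

Definition init_state K M : state K M := [ffun _ => None].

Definition opt_reward (R : numFieldType) M (mu : 'I_M -> nat -> R)
  (fstar : 'I_M -> nat) : R :=
  \sum_(a < M) (fstar a)%:R * mu a (fstar a).

Definition slot_regret (R : numFieldType) K M (mu : 'I_M -> nat -> R)
  (fstar : 'I_M -> nat) (s : state K M) (c : draw K M) : R :=
  opt_reward mu fstar - \sum_(a < M) (load s c a)%:R * mu a (load s c a).

(* expected regret accumulated by the system during the first N slots of the
   fixing phase, started from state s (no regret once all users are fixed,
   i.e. once the phase has ended). *)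
Fixpoint exp_regret (R : numFieldType) K M (mu : 'I_M -> nat -> R)
  (fstar : 'I_M -> nat) (N : nat) (s : state K M) : R :=
  match N with
  | 0 => 0
  | N'.+1 =>
      if all_fixed s then 0
      else (M%:R ^+ K)^-1 *
           \sum_(c : draw K M)
              (slot_regret mu fstar s c + exp_regret mu fstar N' (step fstar s c))
  end.

(* Main.v *)
Require Import Defs.
From HB Require Import structures.
From mathcomp Require Import all_boot all_order all_algebra.
From mathcomp Require Import lra ring.
From mathcomp Require Import all_classical all_reals all_analysis.
Import Order.TTheory GRing.Theory Num.Theory.
Set Implicit Arguments. Unset Strict Implicit. Unset Printing Implicit Defensive.

Lemma cardE K M (k0 : 'I_K) (a0 : 'I_M) :
  #|[set c : draw K M | [forall j, (c j == a0) == (j == k0)]]| = (M.-1 ^ K.-1)%N.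
Proof.
pose F := fun j : 'I_K => if j == k0 then pred1 a0 else predC1 a0.
have -> : #|[set c : draw K M | [forall j, (c j == a0) == (j == k0)]]| =
  #|(family F : simpl_pred (draw K M))|.
  apply: eq_card => c; rewrite inE; apply/forallP/familyP => H j; have := H j;
  rewrite /F; case: (j == k0); rewrite /= ?inE; by case: (c j == a0).
rewrite card_family foldrE big_map big_enum /=.
rewrite (bigD1 k0) //= /F eqxx card1.
rewrite (eq_bigr (fun _ => M.-1)); last first.
  by move=> j /negbTE ->; rewrite cardC1 card_ord.
by rewrite prod_nat_const mul1n cardC1 card_ord.
Qed.

Definition unf K M (s : state K M) := #|[set k | s k == None]|.
Definition cnt K M (s : state K M) (a : 'I_M) := #|[set k | s k == Some a]|.
Definition inv K M (fstar : 'I_M -> nat) (s : state K M) := forall a, (cnt s a <= fstar a)%N.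

Lemma inv_init K M fstar : inv fstar (init_state K M).
Proof.
move=> a; rewrite /cnt (_ : [set k | _] = finset.set0) ?cards0 //.
by apply/setP => k; rewrite !inE ffunE.
Qed.

Lemma inv_step K M fstar (s : state K M) c : inv fstar s -> inv fstar (step fstar s c).
Proof.
move=> Hs a; rewrite /cnt.
case: (leqP (load s c a) (fstar a)) => Hl.
  apply: leq_trans Hl; apply: subset_leq_card; apply/fintype.subsetP => k.
  rewrite !inE /step ffunE /pos; case: (s k) => [b|] //.
  by case: ifP => // _ /eqP [->].
apply: leq_trans (Hs a); apply: subset_leq_card; apply/fintype.subsetP => k.
rewrite !inE /step ffunE; case: (s k) => [b|] //.
case: ifP => // H /eqP [Hk]; by move: H; rewrite Hk leqNgt Hl.
Qed.

Lemma unf_step K M fstar (s : state K M) c : (unf (step fstar s c) <= unf s)%N.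
Proof.
apply: subset_leq_card; apply/fintype.subsetP => k; rewrite !inE /step ffunE.
by case: (s k).
Qed.

Lemma cnt_sum K M (s : state K M) :
  (\sum_a cnt s a = \sum_k (s k != None))%N.
Proof.
rewrite /cnt.
under eq_bigr do rewrite -sum1_card big_mkcond /=.
rewrite exchange_big /=; apply: eq_bigr => k _.
under eq_bigr do rewrite inE.
case: (s k) => [b|] /=.
  rewrite (bigD1 b) //= eqxx big1 // => a Hab.
  by case: eqP => // [[E]]; rewrite E eqxx in Hab.
by rewrite big1.
Qed.

Lemma exists_free K M (fstar : 'I_M -> nat) (s : state K M) :
  (\sum_(a < M) fstar a)%N = K -> ~~ all_fixed s ->
  exists k0 a0, s k0 = None /\ (cnt s a0 < fstar a0)%N.
Proof.
move=> Hsum; rewrite /all_fixed negb_forall => /existsP [k0]; rewrite negbK => /eqP Hk0.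
exists k0.
have Hlt : (\sum_a cnt s a < K)%N.
  rewrite cnt_sum (bigD1 k0) //= Hk0 /= add0n.
  apply: (@leq_ltn_trans (\sum_(k | k != k0) 1)%N).
    by apply: leq_sum => k _; case: (_ != _).
  rewrite sum1_card cardC1 card_ord; have := ltn_ord k0; move: (nat_of_ord k0) => x; case: (K) => //.
case: (boolP [exists a, cnt s a < fstar a]%N) => [/existsP [a0 H]|]; first by exists a0.
rewrite negb_exists => /forallP H; exfalso.
move: Hlt; rewrite -{2}Hsum ltnNge => /negP; apply; apply: leq_sum => a _.
by have := H a; rewrite -leqNgt.
Qed.

Lemma step_E K M fstar (s : state K M) c k0 a0 :
  s k0 = None -> (cnt s a0 < fstar a0)%N ->
  c \in [set c : draw K M | [forall j, (c j == a0) == (j == k0)]] ->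
  (unf (step fstar s c) < unf s)%N.
Proof.
move=> Hk0 Hc; rewrite inE => /forallP Hj.
have Ha : c k0 = a0 by apply/eqP; rewrite (eqP (Hj k0)) eqxx.
have Hload : (load s c a0 <= fstar a0)%N.
  apply: leq_trans Hc; rewrite /load.
  apply: (@leq_trans #|k0 |: [set k | s k == Some a0]|).
    apply: subset_leq_card; apply/fintype.subsetP => k; rewrite !inE /pos.
    case: (s k) => [b|] /=; first by move=> /eqP ->; rewrite eqxx orbT.
    by rewrite (eqP (Hj k)) => ->.
  by rewrite cardsU1 /cnt; case: (_ \notin _).
rewrite /unf (cardsD1 k0 [set k | s k == None]) inE Hk0 eqxx add1n ltnS.
apply: subset_leq_card; apply/fintype.subsetP => k; rewrite !inE /step ffunE.
case Hs: (s k) => [b|] //; case: ifP => // Hf _.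
rewrite andbT; apply/eqP => Ek; subst k; by move: Hf; rewrite Ha Hload.
Qed.

Local Open Scope ring_scope.

Lemma slot_le (R : realFieldType) K M (mu : 'I_M -> nat -> R) fstar (s : state K M) (c : draw K M) :
  (forall a n, 0 <= mu a n <= 1) -> (\sum_(a < M) fstar a)%N = K ->
  slot_regret mu fstar s c <= K%:R.
Proof.
move=> Hmu Hsum; rewrite /slot_regret /opt_reward.
have H1 : \sum_(a < M) (fstar a)%:R * mu a (fstar a) <= K%:R.
  rewrite -Hsum natr_sum; apply: ler_sum => a _; apply: ler_piMr => //.
  by case/andP: (Hmu a (fstar a)).
have H2 : 0 <= \sum_(a < M) (load s c a)%:R * mu a (load s c a).
  by apply: sumr_ge0 => a _; apply: mulr_ge0 => //; case/andP: (Hmu a (load s c a)).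
lra.
Qed.

Lemma main (R : realFieldType) K M (mu : 'I_M -> nat -> R) fstar :
  (2 <= M)%N -> (forall a n, 0 <= mu a n <= 1) -> (\sum_(a < M) fstar a)%N = K ->
  forall N (s : state K M), inv fstar s ->
  exp_regret mu fstar N s <=
    K%:R * (unf s)%:R * (M%:R ^+ K / (M.-1)%:R ^+ K.-1).
Proof.
move=> HM Hmu Hsum.
set Q := (M%:R ^+ K / (M.-1)%:R ^+ K.-1 : R).
have Mpos : 0 < (M%:R : R) by rewrite ltr0n; case: M HM {Q mu fstar Hsum Hmu}.
have M1pos : 0 < ((M.-1)%:R : R) by rewrite ltr0n; case: M HM {Q mu fstar Hsum Hmu Mpos} => [|[]].
have HQ : 0 <= Q by apply: divr_ge0; apply: exprn_ge0; apply: ltW.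
have HKQ : 0 <= K%:R * Q by apply: mulr_ge0.
elim=> [|N IH] s Hs /=.
  by apply: mulr_ge0 => //; apply: mulr_ge0.
case: ifP => Hall.
  by apply: mulr_ge0 => //; apply: mulr_ge0.
have [k0 [a0 [Hk0 Hc]]] := exists_free Hsum (negbT Hall).
set E := [set c : draw K M | [forall j, (c j == a0) == (j == k0)]].
have Hterm : forall c, slot_regret mu fstar s c + exp_regret mu fstar N (step fstar s c)
   <= K%:R + K%:R * Q * (unf s)%:R - K%:R * Q * (c \in E)%:R.
  move=> c; have H1 := slot_le s c Hmu Hsum; have H2 := IH _ (inv_step c Hs).
  have Hu : (unf (step fstar s c))%:R <= (unf s)%:R - (c \in E)%:R :> R.
    rewrite lerBrDr -natrD ler_nat; case: (boolP (c \in E)) => HE.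
      by rewrite addn1; exact: step_E HE.
    by rewrite addn0; exact: unf_step.
  have H3 := ler_wpM2l HKQ Hu; rewrite mulrBr in H3.
  have E1 : K%:R * (unf (step fstar s c))%:R * Q = K%:R * Q * (unf (step fstar s c))%:R by rewrite mulrAC.
  rewrite E1 in H2; move: H1 H2 H3; move: (slot_regret _ _ _ _) (exp_regret _ _ _ _) => x y h1 h2 h3; rewrite -addrA; apply: lerD => //; exact: le_trans h2 h3.
apply: le_trans (ler_wpM2l _ (ler_sum _ (fun c _ => Hterm c))) _.
  by rewrite invr_ge0; apply: exprn_ge0; apply: ltW.
rewrite sumrB sumr_const -mulr_sumr.
have -> : \sum_(c : draw K M) (c \in E)%:R = #|E|%:R :> R.
  rewrite -sum1_card natr_sum [RHS]big_mkcond /=; apply: eq_bigr => c _.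
  by case: (c \in E).
rewrite /E cardE card_ffun !card_ord -mulr_natr !natrX /Q ?mul1r -[_ *+ (M ^ K)%N]mulr_natr natrX.
have Mn0 : (M%:R : R) ^+ K != 0 by rewrite expf_neq0 // gt_eqF.
have M1n0 : ((M.-1)%:R : R) ^+ K.-1 != 0 by rewrite expf_neq0 // gt_eqF.
rewrite le_eqVlt; apply/orP; left; apply/eqP; field.
by rewrite Mn0 M1n0.
Qed.

Lemma unf_init K M : unf (init_state K M) = K.
Proof.
rewrite /unf (_ : [set k | _] = [set: 'I_K]) ?cardsT ?card_ord //.
by apply/setP => k; rewrite !inE ffunE.
Qed.

Theorem lemma3 (R : realType) (K M : nat) (mu : 'I_M -> nat -> R)
  (fstar : 'I_M -> nat)
  (HM : (2 <= M)%N)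
  (Hmu : forall a n, 0 <= mu a n <= 1)
  (Hsum : (\sum_(a < M) fstar a)%N = K)
  (Hopt : forall f : 'I_M -> nat, (\sum_(a < M) f a)%N = K ->
     \sum_(a < M) (f a)%:R * mu a (f a) <= \sum_(a < M) (fstar a)%:R * mu a (fstar a)) :
  forall N : nat,
    exp_regret mu fstar N (init_state K M)
      <= (K%:R ^+ 2) * M%:R * expR ((K%:R - 1) / (M%:R - 1)).
Proof.
move=> N.
apply: le_trans (main HM Hmu Hsum N (@inv_init K M fstar)) _.
rewrite unf_init.
set m := M.-1.
have m1 : (1 <= m)%N by rewrite /m -ltnS prednK // ltnW.
have eM : M%:R = m%:R + 1 :> R by rewrite natr1 /m prednK // ltnW.
have mpos : 0 < (m%:R : R) by rewrite ltr0n.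
have [K0|Kpos] := eqVneq K 0%N.
  by rewrite K0 !mul0r expr0n /= !mul0r.
set k := K.-1.
have eK : K = k.+1 by rewrite /k prednK // lt0n.
rewrite eK /= -natr1 addrK eM addrK expr2 -!mulrA.
apply: ler_wpM2l => //; apply: ler_wpM2l => //.
rewrite exprS -mulrA; apply: ler_wpM2l; first by apply: addr_ge0.
rewrite -expr_div_n (_ : k%:R / m%:R = k%:R * m%:R^-1) // expRM_natl.
apply: lerXn2r; rewrite ?nnegrE.
- by apply: divr_ge0 => //; apply: addr_ge0.
- exact: expR_ge0.
rewrite mulrDl divff ?gt_eqF // mul1r; exact: expR_ge1Dx.
Qed.
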